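(* Let $\mathcal Q$ be a set of probability measures and $(\mathtt Q_i)_{i\in I}\subseteq\mathcal Q$ a family such that for every $t\in\mathbb N_0$ and $A\in\mathcal F_t$: if $\mathtt Q(A)>0$ for some $\mathtt Q\in\mathcal Q$, then $\mathtt Q_i(A)>0$ for some $i\in I$. Then: (1) if $(\mathfrak p_t)$ is an anytime-valid $p$-value for $\mathcal Q$ and is $\mathtt Q_i$-admissible for each $i\in I$, then it is $\mathcal Q$-admissible; (2) if $(\mathfrak e_t)$ is an anytime-valid $e$-value for $\mathcal Q$ and is $\mathtt Q_i$-admissible for each $i\in I$, then it is $\mathcal Q$-admissible; (3) if $(\psi_t)$ is a $(\mathcal Q,\alpha)$-sequential test and is $\mathtt Q_i$-admissible (as a $(\{\mathtt Q_i\},\alpha)$-sequential test) for each $i\in I$, then it is $\mathcal Q$-admissible.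
   Context: Setup: observations $(X_t)_{t\in\mathbb N}$, an independent $[0,1]$-uniform $U$, filtration $\mathcal F_0=\sigma(U)$, $\mathcal F_t=\sigma(U,X_1,\dots,X_t)$, $\mathcal F_\infty=\sigma(\bigcup_t\mathcal F_t)$; stopping times may be infinite. - Anytime-valid $p$-value for $\mathcal Q$: adapted $[0,1]$-valued $(\mathfrak p_t)_{t\in\mathbb N_0}$ with $\mathtt Q(\mathfrak p_\tau\le\alpha)\le\alpha$ for all stopping times $\tau$, $\mathtt Q\in\mathcal Q$, $\alpha\in[0,1]$ ($\mathfrak p_\infty:=\liminf_t\mathfrak p_t$). Anytime-valid $e$-value: adapted $[0,\infty]$-valued with $\mathtt E_{\mathtt Q}[\mathfrak e_\tau]\le1$ for all stopping times and $\mathtt Q\in\mathcal Q$ ($\mathfrak e_\infty:=\limsup$). $(\mathcal Q,\alpha)$-sequential test: adapted $\{0,1\}$-valued with $\mathtt Q(\psi_\tau=1)\le\alpha$ for all stopping times and $\mathtt Q\in\mathcal Q$. - Admissibility: a $\mathcal Q$-valid $(\mathfrak p_t)$ is $\mathcal Q$-inadmissible if there is a $\mathcal Q$-valid $(\mathfrak p'_t)$ with $\mathtt Q(\mathfrak p'_t\le\mathfrak p_t)=1$ for all $t\in\mathbb N_0$, $\mathtt Q\in\mathcal Q$, and $\mathtt Q(\mathfrak p'_t<\mathfrak p_t)>0$ for some $t$ and some $\mathtt Q\in\mathcal Q$; $\mathcal Q$-admissible otherwise. Analogously for $e$-values and sequential tests with reversed inequalities. For $\mathcal Q=\{\mathtt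 Q\}$ we say $\mathtt Q$-admissible. *)

(* Defs.v *)
From HB Require Import structures.
From mathcomp Require Import all_boot all_order all_algebra.
From mathcomp Require Import all_classical all_reals all_analysis.
From mathcomp Require Import measurable_realfun.
Set Implicit Arguments. Unset Strict Implicit. Unset Printing Implicit Defensive.
Import Order.TTheory GRing.Theory Num.Theory.
Local Open Scope classical_set_scope.
Local Open Scope ring_scope.

Section AnytimeValid.
Context {d dT : measure_display} (R : realType).
Context (Omega : measurableType d) (T : measurableType dT).
(* observations X_1, X_2, ... (X 0 is unused) and the randomisation U *)
Context (X : nat -> Omega -> T) (U : Omega -> R).

Definition gen_F (t : nat) : set (set Omega) :=
  [set A | (exists B : set R, measurable B /\ A = U @^-1` B) \/
           (exists (s : nat) (B : set T),
               (1 <= s <= t)%N /\ measurable B /\ A = X s @^-1` B)].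
Definition filt (t : nat) : set (set Omega) := <<s gen_F t >>.

Definition sigmaX : set (set Omega) :=
  <<s [set A | exists (s : nat) (B : set T),
                 (1 <= s)%N /\ measurable B /\ A = X s @^-1` B] >>.

Definition uniform_indep (Q : probability Omega R) : Prop :=
  (forall x : R, 0 <= x <= 1 -> Q [set w | U w <= x] = x%:E) /\
  (forall (B : set R) (A : set Omega), measurable B -> sigmaX A ->
     Q (U @^-1` B `&` A) = (Q (U @^-1` B) * Q A)%E).

(* stopping times, possibly infinite (None = infinity) *)
Definition stopping_time (tau : Omega -> option nat) : Prop :=
  forall t : nat, filt t [set w | exists2 s, tau w = Some s & (s <= t)%N].

Definition adapted_R (p : nat -> Omega -> R) : Prop :=
  forall t (B : set R), measurable B -> filt t (p t @^-1` B).
Definition adapted_eR (e : nat -> Omega -> \bar R) : Prop :=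
  forall (t : nat) (B : set (\bar R)), measurable B -> filt t (e t @^-1` B).
Definition adapted_bool (psi : nat -> Omega -> bool) : Prop :=
  forall t, filt t (psi t @^-1` [set true]).

Definition stopped_p (p : nat -> Omega -> R) (tau : Omega -> option nat)
    (w : Omega) : R :=
  match tau w with Some t => p t w | None => limn_inf (fun t => p t w) end.
Definition stopped_e (e : nat -> Omega -> \bar R) (tau : Omega -> option nat)
    (w : Omega) : \bar R :=
  match tau w with Some t => e t w | None => limn_esup (fun t => e t w) end.
Definition stopped_psi (psi : nat -> Omega -> bool) (tau : Omega -> option nat)
    (w : Omega) : bool :=
  match tau w with
  | Some t => psi t w
  | None => `[< forall N : nat, exists2 t, (N <= t)%N & psi t w >]
  end.

Definition anytime_p (QQ : set (probability Omega R)) (p : nat -> Omega -> R) :=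
  adapted_R p /\ (forall t w, 0 <= p t w <= 1) /\
  forall tau, stopping_time tau -> forall Q, QQ Q -> forall alpha : R,
    0 <= alpha <= 1 ->
    (Q [set w | (stopped_p p tau w <= alpha)%R] <= alpha%:E)%E.

Definition anytime_e (QQ : set (probability Omega R))
    (e : nat -> Omega -> \bar R) :=
  adapted_eR e /\ (forall t w, (0 <= e t w)%E) /\
  forall tau, stopping_time tau -> forall Q, QQ Q ->
    (\int[Q]_w stopped_e e tau w <= 1)%E.

Definition seq_test (QQ : set (probability Omega R)) (alpha : R)
    (psi : nat -> Omega -> bool) :=
  adapted_bool psi /\
  forall tau, stopping_time tau -> forall Q, QQ Q ->
    (Q [set w | stopped_psi psi tau w] <= alpha%:E)%E.

Definition p_admissible (QQ : set (probability Omega R)) (p : nat -> Omega -> R) :=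
  ~ exists p' : nat -> Omega -> R, anytime_p QQ p' /\
    (forall t Q, QQ Q -> Q [set w | (p' t w <= p t w)%R] = 1%E) /\
    (exists t Q, QQ Q /\ (0 < Q [set w | (p' t w < p t w)%R])%E).

Definition e_admissible (QQ : set (probability Omega R))
    (e : nat -> Omega -> \bar R) :=
  ~ exists e' : nat -> Omega -> \bar R, anytime_e QQ e' /\
    (forall t Q, QQ Q -> Q [set w | (e' t w >= e t w)%E] = 1%E) /\
    (exists t Q, QQ Q /\ (0 < Q [set w | (e' t w > e t w)%E])%E).

Definition test_admissible (QQ : set (probability Omega R)) (alpha : R)
    (psi : nat -> Omega -> bool) :=
  ~ exists psi' : nat -> Omega -> bool, seq_test QQ alpha psi' /\
    (forall t Q, QQ Q -> Q [set w | psi t w -> psi' t w] = 1%E) /\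
    (exists t Q, QQ Q /\ (0 < Q [set w | psi' t w /\ ~~ psi t w])%E).

End AnytimeValid.

(* Main.v *)
Require Import Defs.
From HB Require Import structures.
From mathcomp Require Import all_boot all_order all_algebra.
From mathcomp Require Import all_classical all_reals all_analysis.
From mathcomp Require Import measurable_realfun.
Import Order.TTheory GRing.Theory Num.Theory.
Local Open Scope classical_set_scope.
Local Open Scope ring_scope.

Section H.
Context {d dT : measure_display} (R : realType).
Context (Omega : measurableType d) (T : measurableType dT).
Context (X : nat -> Omega -> T) (U : Omega -> R).

Lemma filtI t A B : filt X U t A -> filt X U t B -> filt X U t (A `&` B).
Proof. move=> hA hB. exact: (@measurableI _ (g_sigma_algebraType (gen_F X U t)) A B). Qed.

Lemma filtU t (A : (set Omega)^nat) : (forall n, filt X U t (A n)) -> filt X U t (\bigcup_n A n).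
Proof. move=> h. exact: (@sigma_algebra_bigcup _ setT (gen_F X U t)). Qed.

Lemma filt0 t : filt X U t set0.
Proof. exact: (@sigma_algebra0 _ setT (gen_F X U t)). Qed.

Lemma filtC t A : filt X U t A -> filt X U t (~` A).
Proof. exact: (@sigma_algebraC _ (gen_F X U t)). Qed.

Lemma filt_lt t (f g : Omega -> R) :
  (forall B, measurable B -> filt X U t (f @^-1` B)) ->
  (forall B, measurable B -> filt X U t (g @^-1` B)) ->
  filt X U t [set w | f w < g w].
Proof.
move=> hf hg.
have -> : [set w | f w < g w] = \bigcup_n (match @unpickle rat n with
  | Some q => f @^-1` `]-oo, (ratr q : R)[ `&` g @^-1` `](ratr q : R), +oo[
  | None => set0 end).
  apply/seteqP; split=> w /=.
    move=> fg. have [q] := @rat_in_itvoo R _ _ fg.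
    rewrite in_itv /= => /andP[h1 h2].
    exists (pickle q); first by [].
    rewrite pickleK; split; rewrite /= in_itv /=; [exact: h1| by rewrite h2].
  move=> [n _]; case: (unpickle n) => [q|//] [] /=; rewrite !in_itv /= andbT => h1 h2.
  exact: lt_trans h1 h2.
apply: filtU => n; case: (unpickle n) => [q|]; last exact: filt0.
apply: filtI; [apply: hf|apply: hg]; exact: measurable_itv.
Qed.

Lemma erat_between (x y : \bar R) : (x < y)%E ->
  exists q : rat, (x < (ratr q : R)%:E)%E /\ ((ratr q : R)%:E < y)%E.
Proof.
have H (a b : R) : a < b -> exists q : rat, a < ratr q /\ ratr q < b.
  move=> ab; have [q] := @rat_in_itvoo R _ _ ab.
  by rewrite in_itv /= => /andP[h1 h2]; exists q.
case: x => [a| |]; case: y => [b| |] //=.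
- by rewrite lte_fin => /H[q [h1 h2]]; exists q; rewrite !lte_fin.
- move=> _; have [q [h1 _]] := H a (a + 1) ltac:(by rewrite ltrDl ltr01).
  by exists q; rewrite lte_fin h1 ltry.
- move=> _; have [q [_ h2]] := H (b - 1) b ltac:(by rewrite gtrBl ltr01).
  by exists q; rewrite lte_fin h2 ltNyr.
- move=> _; have [q [h1 h2]] := H 0 1 ltr01.
  by exists q; rewrite ltry ltNyr.
Qed.
Lemma filt_elt t (f g : Omega -> \bar R) :
  (forall B, measurable B -> filt X U t (f @^-1` B)) ->
  (forall B, measurable B -> filt X U t (g @^-1` B)) ->
  filt X U t [set w | (f w < g w)%E].
Proof.
move=> hf hg.
have -> : [set w | (f w < g w)%E] = \bigcup_n (match @unpickle rat n with
  | Some q => f @^-1` [set` `]-oo, ((ratr q : R)%:E)[%O] `&` g @^-1` [set` `]((ratr q : R)%:E), +oo[%O]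
  | None => set0 end).
  apply/seteqP; split=> w /=.
    move=> /erat_between[q [h1 h2]].
    exists (pickle q); first by [].
    rewrite pickleK; split; rewrite /= in_itv /=; [exact: h1| by rewrite h2].
  move=> [n _]; case: (unpickle n) => [q|//] [] /=; rewrite !in_itv /= andbT => h1 h2.
  exact: lt_trans h1 h2.
apply: filtU => n; case: (unpickle n) => [q|]; last exact: filt0.
apply: filtI; [apply: hf|apply: hg]; exact: emeasurable_itv.
Qed.
End H.

Theorem proposition10 (d dT : measure_display) (R : realType)
  (Omega : measurableType d) (T : measurableType dT)
  (X : nat -> Omega -> T) (U : Omega -> R)
  (mX : forall s, measurable_fun setT (X s)) (mU : measurable_fun setT U)
  (QQ : set (probability Omega R))
  (hQQ : forall Q, QQ Q -> uniform_indep X U Q)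
  (I : Type) (Qi : I -> probability Omega R) (hQi : forall i, QQ (Qi i))
  (hcover : forall (t : nat) (A : set Omega), filt X U t A ->
     (exists Q, QQ Q /\ (0 < Q A)%E) -> exists i, (0 < Qi i A)%E) :
  (forall p : nat -> Omega -> R, anytime_p X U QQ p ->
     (forall i, p_admissible X U [set Qi i] p) -> p_admissible X U QQ p) /\
  (forall e : nat -> Omega -> \bar R, anytime_e X U QQ e ->
     (forall i, e_admissible X U [set Qi i] e) -> e_admissible X U QQ e) /\
  (forall (alpha : R) (psi : nat -> Omega -> bool), seq_test X U QQ alpha psi ->
     (forall i, test_admissible X U [set Qi i] alpha psi) ->
     test_admissible X U QQ alpha psi).
Proof.
split; [|split].
- move=> p hp hadm [p' [hp' [hle [t [Q [QQ0 hpos]]]]]].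
  have Am := @filt_lt _ _ _ _ _ X U t _ _ (hp'.1 t) (hp.1 t).
  have [i hi] := hcover t _ Am (ex_intro _ Q (conj QQ0 hpos)).
  apply: (hadm i); exists p'; split; [|split].
  + case: hp' => ad [bnd va]; split; [exact: ad|split; [exact: bnd|]].
    by move=> tau st Q0 -> alpha ha; apply: va => //; exact: hQi.
  + by move=> t0 Q0 ->; apply: hle; exact: hQi.
  + by exists t, (Qi i); split.
- move=> e he hadm [e' [he' [hle [t [Q [QQ0 hpos]]]]]].
  have Am := @filt_elt _ _ _ _ _ X U t _ _ (he.1 t) (he'.1 t).
  have [i hi] := hcover t _ Am (ex_intro _ Q (conj QQ0 hpos)).
  apply: (hadm i); exists e'; split; [|split].
  + case: he' => ad [bnd va]; split; [exact: ad|split; [exact: bnd|]].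
    by move=> tau st Q0 ->; apply: va => //; exact: hQi.
  + by move=> t0 Q0 ->; apply: hle; exact: hQi.
  + by exists t, (Qi i); split.
- move=> alpha psi hpsi hadm [psi' [hpsi' [hle [t [Q [QQ0 hpos]]]]]].
  have Am : filt X U t [set w | psi' t w /\ ~~ psi t w].
    have -> : [set w | psi' t w /\ ~~ psi t w] =
      psi' t @^-1` [set true] `&` ~` (psi t @^-1` [set true]).
      apply/seteqP; split => w /=.
        by case: (psi' t w); case: (psi t w) => //= -[].
      by case: (psi' t w); case: (psi t w) => //= -[].
    apply: filtI; first exact: hpsi'.1.
    apply: filtC; exact: hpsi.1.
  have [i hi] := hcover t _ Am (ex_intro _ Q (conj QQ0 hpos)).
  apply: (hadm i); exists psi'; split; [|split].
  + case: hpsi' => ad va; split; [exact: ad|].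
    by move=> tau st Q0 ->; apply: va => //; exact: hQi.
  + by move=> t0 Q0 ->; apply: hle; exact: hQi.
  + by exists t, (Qi i); split.
Qed.
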